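(* There exists a locally finite quasi-transitive planar graph of treewidth at most $2$ that has no periodic orientation, and hence no periodic proper vertex-coloring.
   Context: Locally finite: all degrees finite; quasi-transitive: finitely many $\mathrm{Aut}(G)$-orbits on $V(G)$. An orientation (resp. vertex-coloring) is periodic if the subgroup of automorphisms of $G$ preserving the orientation of every edge (resp. vertex colors) has finitely many orbits on $V(G)$. *)

(* Defs.v *)
From Stdlib Require Import Reals List.
Import ListNotations.
Open Scope R_scope.

Section Graphs.
Variable V : Type.
Variable adj : V -> V -> Prop.

Definition simple_graph : Prop :=
  (forall u v, adj u v -> adj v u) /\ (forall v, ~ adj v v).

Definition locally_finite : Prop :=
  forall v, exists l : list V, forall w, adj v w -> In w l.

Definition automorphism (f : V -> V) : Prop :=
  (exists g : V -> V, (forall x, g (f x) = x) /\ (forall y, f (g y) = y)) /\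
  (forall u v, adj u v <-> adj (f u) (f v)).

Definition finitely_many_orbits (H : (V -> V) -> Prop) : Prop :=
  exists reps : list V, forall v, exists r f, In r reps /\ H f /\ f r = v.

Definition quasi_transitive : Prop := finitely_many_orbits automorphism.

Definition orientation (o : V -> V -> Prop) : Prop :=
  (forall u v, o u v -> adj u v) /\
  (forall u v, adj u v -> (o u v <-> ~ o v u)).

Definition preserves_orientation (o : V -> V -> Prop) (f : V -> V) : Prop :=
  forall u v, adj u v -> (o u v <-> o (f u) (f v)).

Definition periodic_orientation (o : V -> V -> Prop) : Prop :=
  finitely_many_orbits (fun f => automorphism f /\ preserves_orientation o f).

Definition proper_coloring (C : Type) (c : V -> C) : Prop :=
  forall u v, adj u v -> c u <> c v.

Definition periodic_coloring (C : Type) (c : V -> C) : Prop :=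
  finitely_many_orbits (fun f => automorphism f /\ forall v, c (f v) = c v).

Definition arc_ok (p : R -> R * R) (a b : R * R) : Prop :=
  (forall t, continuity_pt (fun s => fst (p s)) t) /\
  (forall t, continuity_pt (fun s => snd (p s)) t) /\
  p 0 = a /\ p 1 = b /\
  (forall s t, 0 <= s <= 1 -> 0 <= t <= 1 -> p s = p t -> s = t).

Definition planar_embedding (pos : V -> R * R) (arc : V -> V -> R -> R * R)
  : Prop :=
  (forall u v, pos u = pos v -> u = v) /\
  (forall u v, adj u v -> arc_ok (arc u v) (pos u) (pos v)) /\
  (forall u v t, adj u v -> arc v u t = arc u v (1 - t)) /\
  (forall u v w t, adj u v -> 0 < t < 1 -> arc u v t <> pos w) /\
  (forall u v u' v' s t, adj u v -> adj u' v' ->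
      ~ ((u = u' /\ v = v') \/ (u = v' /\ v = u')) ->
      0 < s < 1 -> 0 < t < 1 -> arc u v s <> arc u' v' t).

Definition planar : Prop :=
  exists pos arc, planar_embedding pos arc.

End Graphs.

Fixpoint chain {T : Type} (e : T -> T -> Prop) (x : T) (l : list T) : Prop :=
  match l with
  | [] => True
  | y :: l' => e x y /\ chain e y l'
  end.

Definition connected_in {T : Type} (e : T -> T -> Prop) (P : T -> Prop) : Prop :=
  forall a b, P a -> P b ->
    exists l, chain e a l /\ last l a = b /\ Forall P l.

Definition is_tree {T : Type} (e : T -> T -> Prop) : Prop :=
  inhabited T /\ simple_graph T e /\ connected_in e (fun _ => True) /\
  (forall (x : T) (l : list T),
      2 <= length l -> NoDup (x :: l) -> chain e x l -> ~ e (last l x) x)%nat.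

Definition tree_decomposition {V T : Type} (adj : V -> V -> Prop)
  (eT : T -> T -> Prop) (bag : T -> list V) : Prop :=
  is_tree eT /\
  (forall v : V, exists t, In v (bag t)) /\
  (forall u v, adj u v -> exists t, In u (bag t) /\ In v (bag t)) /\
  (forall v : V, connected_in eT (fun t => In v (bag t))).

Definition treewidth_le {V : Type} (adj : V -> V -> Prop) (k : nat) : Prop :=
  exists (T : Type) (eT : T -> T -> Prop) (bag : T -> list V),
    tree_decomposition adj eT bag /\ (forall t, length (bag t) <= k + 1)%nat.

(* Main.v *)
Require Import Defs.
From Stdlib Require Import Reals List Lia ZArith Lra Psatz.
Import ListNotations.

Open Scope nat_scope.

Lemma dm2 k : k = 2*(k/2) + k mod 2 /\ k mod 2 < 2.
Proof. split. apply Nat.div_mod_eq. apply Nat.mod_upper_bound. lia. Qed.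

Definition par (x : Z * nat) : Z * nat := ((fst x + 1)%Z, snd x / 2).
Definition c0 (x : Z * nat) : Z * nat := ((fst x - 1)%Z, 2 * snd x).
Definition c1 (x : Z * nat) : Z * nat := ((fst x - 1)%Z, 2 * snd x + 1).

Lemma par_c0 x : par (c0 x) = x.
Proof. destruct x as [n k]; unfold par, c0; cbn [fst snd]. apply (f_equal2 pair). lia.
  destruct (dm2 (2*k)); lia. Qed.
Lemma par_c1 x : par (c1 x) = x.
Proof. destruct x as [n k]; unfold par, c1; cbn [fst snd]. apply (f_equal2 pair). lia.
  destruct (dm2 (2*k+1)); lia. Qed.
Lemma par_inv z y : par z = y -> z = c0 y \/ z = c1 y.
Proof. destruct z as [m i], y as [n k]; unfold par, c0, c1; cbn [fst snd]. intro H.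
  apply pair_equal_spec in H as [H1 H2]. destruct (dm2 i). subst n k.
  destruct (Nat.eq_dec (i mod 2) 0); [left|right]; apply (f_equal2 pair); lia. Qed.
Lemma c0_neq_c1 x : c0 x <> c1 x.
Proof. destruct x; unfold c0, c1; intro H; injection H; lia. Qed.
Lemma par_neq x : par x <> x.
Proof. destruct x; unfold par; intro H; injection H; lia. Qed.
Lemma c0_neq x : c0 x <> x.
Proof. destruct x; unfold c0; intro H; injection H; lia. Qed.
Lemma c1_neq x : c1 x <> x.
Proof. destruct x; unfold c1; intro H; injection H; lia. Qed.

Inductive V := T (x : Z * nat) | D (x : Z * nat).

Inductive E (x : Z * nat) : V -> V -> Prop :=
| E1 : E x (T x) (T (c0 x))
| E2 : E x (T x) (T (c1 x))
| E3 : E x (T (c0 x)) (T (c1 x))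
| E4 : E x (D x) (T (c0 x))
| E5 : E x (D x) (T (c1 x)).

Definition adj (u v : V) : Prop := exists x, E x u v \/ E x v u.

Definition adjc (u v : V) : Prop :=
  match u, v with
  | T z, T w => w = par z \/ z = par w \/ (par z = par w /\ z <> w)
  | D y, T w => par w = y
  | T w, D y => par w = y
  | D _, D _ => False
  end.

Lemma adj_char u v : adj u v <-> adjc u v.
Proof.
  split.
  - intros [x [H|H]]; destruct H; simpl; rewrite ?par_c0, ?par_c1; auto;
      right; right; split; auto; [apply c0_neq_c1| intro H; apply (c0_neq_c1 x); auto].
  - destruct u as [z|y], v as [w|w']; simpl.
    + intros [H|[H|[H1 H2]]].
      * subst w. remember (par z) as p eqn:Hp. symmetry in Hp.
        destruct (par_inv z p Hp) as [E'|E']; subst z; exists p; right; constructor.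
      * subst z. remember (par w) as p eqn:Hp. symmetry in Hp.
        destruct (par_inv w p Hp) as [E'|E']; subst w; exists p; left; constructor.
      * remember (par z) as p eqn:Hp. symmetry in Hp.
        destruct (par_inv z p Hp) as [Ez|Ez];
        destruct (par_inv w p (eq_sym H1)) as [Ew|Ew]; subst z w; exists p.
        -- exfalso; apply H2; congruence.
        -- left; constructor.
        -- right; constructor.
        -- exfalso; apply H2; congruence.
    + intro H. exists w'. right. destruct (par_inv z w' H) as [E'|E']; subst z; constructor.
    + intro H. exists y. left. destruct (par_inv w y H) as [E'|E']; subst w; constructor.
    + tauto.
Qed.

Lemma adj_sym u v : adj u v -> adj v u.
Proof. intros [x [H|H]]; exists x; tauto. Qed.

Lemma adj_irrefl v : ~ adj v v.
Proof. rewrite adj_char. destruct v; simpl; auto.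
  intros [H|[H|[_ H]]]; auto; eapply par_neq; eauto. Qed.

Open Scope nat_scope.

Lemma c0_neq_par x : c0 x <> par x.
Proof. destruct x; unfold c0, par; intro H; apply pair_equal_spec in H; cbn [fst snd] in H; lia. Qed.
Lemma c1_neq_par x : c1 x <> par x.
Proof. destruct x; unfold c1, par; intro H; apply pair_equal_spec in H; cbn [fst snd] in H; lia. Qed.

Lemma adj_T_c0 x : adj (T x) (T (c0 x)).
Proof. exists x; left; constructor. Qed.
Lemma adj_T_c1 x : adj (T x) (T (c1 x)).
Proof. exists x; left; constructor. Qed.
Lemma adj_T_par x : adj (T x) (T (par x)).
Proof. apply adj_char; simpl; auto. Qed.
Lemma adj_T_Dpar x : adj (T x) (D (par x)).
Proof. apply adj_char; simpl; auto. Qed.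

Lemma D_nbrs y w : adj (D y) w -> w = T (c0 y) \/ w = T (c1 y).
Proof. rewrite adj_char. destruct w as [w|w]; simpl; [|tauto].
  intro H. destruct (par_inv w y H) as [->| ->]; auto. Qed.

Lemma DT_nbr c y : adj (T c) (D y) -> y = par c.
Proof. rewrite adj_char; simpl; auto. Qed.

Lemma common_T z y : adj (T z) (T (c0 y)) -> adj (T z) (T (c1 y)) -> z = y.
Proof.
  rewrite !adj_char; simpl. rewrite par_c0, par_c1.
  intros H0 H1.
  destruct H0 as [H0|[H0|[H0 H0']]]; destruct H1 as [H1|[H1|[H1 H1']]]; auto.
  all: first [ exfalso; apply (c0_neq_c1 y); congruence
             | exfalso; apply (c0_neq y); congruence
             | exfalso; apply (c1_neq y); congruence
             | destruct (par_inv z y H0) as [->| ->]; tauto ].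
Qed.

Definition Aut := automorphism V adj.

Lemma auto_inv f : Aut f -> exists g, Aut g /\ (forall x, g (f x) = x) /\ (forall y, f (g y) = y).
Proof.
  intros [[g [H1 H2]] H3]. exists g. split; [|auto].
  split. - exists f; auto.
  - intros u v. rewrite (H3 (g u) (g v)), !H2. tauto.
Qed.

Lemma auto_inj f : Aut f -> forall a b, f a = f b -> a = b.
Proof. intros [[g [H1 H2]] H3] a b H. rewrite <- (H1 a), <- (H1 b), H; auto. Qed.

Lemma auto_adj f u v : Aut f -> adj u v -> adj (f u) (f v).
Proof. intros [_ H] A. apply (proj1 (H u v)); auto. Qed.

Lemma auto_T f x : Aut f -> exists x', f (T x) = T x'.
Proof.
  intro Hf. destruct (f (T x)) as [x'|y] eqn:Ef; [eauto|exfalso].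
  pose proof (auto_adj f _ _ Hf (adj_T_c0 x)) as A0.
  pose proof (auto_adj f _ _ Hf (adj_T_c1 x)) as A1.
  pose proof (auto_adj f _ _ Hf (adj_T_par x)) as A2.
  rewrite Ef in A0, A1, A2.
  apply D_nbrs in A0; apply D_nbrs in A1; apply D_nbrs in A2.
  assert (I : forall a b, f a = f b -> a = b) by (apply auto_inj; auto).
  assert (N01 : T (c0 x) <> T (c1 x)) by (intro H; apply (c0_neq_c1 x); congruence).
  assert (N02 : T (c0 x) <> T (par x)) by (intro H; apply (c0_neq_par x); congruence).
  assert (N12 : T (c1 x) <> T (par x)) by (intro H; apply (c1_neq_par x); congruence).
  destruct A0 as [A0|A0]; destruct A1 as [A1|A1]; destruct A2 as [A2|A2];
  first [ apply N01; apply I; congruence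
        | apply N02; apply I; congruence
        | apply N12; apply I; congruence ].
Qed.

Lemma auto_D f y : Aut f -> exists y', f (D y) = D y'.
Proof.
  intro Hf. destruct (f (D y)) as [z|y'] eqn:Ef; [exfalso|eauto].
  destruct (auto_inv f Hf) as [g [Hg [G1 G2]]].
  destruct (auto_T g z Hg) as [z' Ez]. rewrite <- Ef, G1 in Ez. discriminate.
Qed.

Lemma auto_par f c c' : Aut f -> f (T c) = T c' -> f (T (par c)) = T (par c').
Proof.
  intros Hf Ec. set (p := par c).
  destruct (auto_D f p Hf) as [y' Ey].
  assert (Hy : y' = par c').
  { apply DT_nbr. rewrite <- Ec, <- Ey. apply auto_adj; auto. apply adj_T_Dpar. }
  subst y'.
  assert (D0 : adj (D p) (T (c0 p))) by (exists p; left; constructor).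
  assert (D1 : adj (D p) (T (c1 p))) by (exists p; left; constructor).
  apply (auto_adj f _ _ Hf) in D0. apply (auto_adj f _ _ Hf) in D1.
  rewrite Ey in D0, D1. apply D_nbrs in D0. apply D_nbrs in D1.
  assert (P0 := auto_adj f _ _ Hf (adj_T_c0 p)).
  assert (P1 := auto_adj f _ _ Hf (adj_T_c1 p)).
  destruct (auto_T f p Hf) as [z Ez]. rewrite Ez in P0, P1 |- *.
  assert (I : forall a b, f a = f b -> a = b) by (apply auto_inj; auto).
  assert (N01 : T (c0 p) <> T (c1 p)) by (intro H; apply (c0_neq_c1 p); congruence).
  f_equal.
  destruct D0 as [D0|D0]; destruct D1 as [D1|D1]; rewrite D0, D1 in *.
  - exfalso; apply N01, I; congruence.
  - apply common_T; auto.
  - apply common_T; auto.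
  - exfalso; apply N01, I; congruence.
Qed.

Lemma auto_comp f g : Aut f -> Aut g -> Aut (fun x => g (f x)).
Proof.
  intros Hf Hg.
  destruct (auto_inv f Hf) as [f' [_ [F1 F2]]].
  destruct (auto_inv g Hg) as [g' [_ [G1 G2]]].
  split.
  - exists (fun y => f' (g' y)). split; intros; rewrite ?G1, ?F1, ?F2, ?G2; auto.
  - intros u v. destruct Hf as [_ Hf]; destruct Hg as [_ Hg].
    rewrite (Hf u v). apply Hg.
Qed.

Open Scope nat_scope.

Fixpoint parN (d : nat) (x : Z * nat) : Z * nat :=
  match d with 0 => x | S d => parN d (par x) end.

Lemma auto_parN f d c c' : Aut f -> f (T c) = T c' -> f (T (parN d c)) = T (parN d c').
Proof. revert c c'; induction d; intros c c' Hf E; simpl; auto.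
  apply IHd; auto. apply auto_par; auto. Qed.

Lemma parN_val d n k : parN d (n, k) = ((n + Z.of_nat d)%Z, k / 2 ^ d).
Proof. revert n k; induction d; intros n k; cbn [parN].
  - rewrite Nat.pow_0_r, Nat.div_1_r. apply (f_equal2 pair); lia.
  - unfold par at 1. cbn [fst snd]. rewrite IHd. apply (f_equal2 pair). lia.
    rewrite Nat.Div0.div_div, Nat.pow_succ_r'. f_equal. Qed.

Lemma lt_pow2 n : n < 2 ^ n.
Proof. induction n; simpl; lia. Qed.

Lemma zn_eq_dec (x y : Z * nat) : {x = y} + {x <> y}.
Proof. decide equality; [apply Nat.eq_dec | apply Z.eq_dec]. Qed.

Lemma sib3 c c' c'' : par c' = par c -> par c'' = par c -> c <> c' -> c'' <> c' -> c'' = c.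
Proof.
  intros H1 H2 N1 N2. set (p := par c) in *.
  destruct (par_inv c p eq_refl) as [E|E]; destruct (par_inv c' p H1) as [E'|E'];
  destruct (par_inv c'' p H2) as [E''|E'']; congruence.
Qed.

Definition NoSwap (H : (V -> V) -> Prop) :=
  forall h u v, H h -> adj u v -> h u = v -> h v = u -> False.
Definition Hclosed (H : (V -> V) -> Prop) :=
  forall f g, H f -> H g -> exists h, H h /\ forall x, h (f x) = g x.

Lemma fix_down (H : (V -> V) -> Prop) : (forall f, H f -> Aut f) -> NoSwap H ->
  forall h, H h -> forall d c, h (T (parN d c)) = T (parN d c) -> h (T c) = T c.
Proof.
  intros HA NS h Hh d. assert (Ah := HA h Hh). induction d; intros c Hc; simpl in Hc; auto.
  apply IHd in Hc. destruct (auto_T h c Ah) as [c' Ec].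
  assert (Pc := auto_par h c c' Ah Ec). rewrite Hc in Pc.
  destruct (zn_eq_dec c c') as [->|Ne]; auto.
  destruct (auto_T h c' Ah) as [c'' Ec'].
  assert (Pc' := auto_par h c' c'' Ah Ec').
  assert (Hpc : par c' = par c) by congruence.
  rewrite Hpc, Hc in Pc'. assert (Pc'' : par c = par c'') by congruence.
  assert (N2 : c'' <> c').
  { intro E. subst c''. apply Ne. assert (T c = T c') by (apply (auto_inj h Ah); congruence). congruence. }
  assert (E := sib3 c c' c'' Hpc (eq_sym Pc'') Ne N2). subst c''.
  exfalso. apply (NS h (T c) (T c') Hh); auto.
  apply adj_char. simpl. right; right; split; auto.
Qed.

Lemma key (H : (V -> V) -> Prop) : (forall f, H f -> Aut f) -> NoSwap H ->
  forall h D k k', H h -> k < 2 ^ D -> k' < 2 ^ D ->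
  h (T (0%Z, k)) = T (0%Z, k') -> k = k'.
Proof.
  intros HA NS h D k k' Hh Hk Hk' E.
  assert (P := auto_parN h D _ _ (HA h Hh) E).
  assert (Q : parN D (0%Z, k') = parN D (0%Z, k)) by (rewrite !parN_val, !Nat.div_small; auto).
  rewrite Q in P.
  apply (fix_down H HA NS h Hh) in P. rewrite P in E. congruence.
Qed.

Lemma no_periodic (H : (V -> V) -> Prop) : (forall f, H f -> Aut f) -> NoSwap H ->
  Hclosed H -> ~ finitely_many_orbits V H.
Proof.
  intros HA NS HC [reps Hr].
  set (M := S (length reps)).
  assert (Main : forall m, m <= M -> exists L, length L = m /\ NoDup L /\ incl L reps /\ forall r, In r L -> exists k f, k < m /\ H f /\ f r = T (0%Z, k)).
  { induction m; intro Hm.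
    - exists []; repeat split; auto. constructor. intros r []. intros r [].
    - destruct IHm as [L [HL1 [HL2 [HL3 HL4]]]]; [lia|].
      destruct (Hr (T (0%Z, m))) as [r [f [Hin [Hf Efr]]]].
      exists (r :: L). repeat split.
      + simpl; lia.
      + constructor; auto. intro Hr'. destruct (HL4 r Hr') as [k [g [Hk [Hg Egr]]]].
        destruct (HC g f Hg Hf) as [h [Hh Eh]].
        specialize (Eh r). rewrite Egr, Efr in Eh.
        assert (k = m). { apply (key H HA NS h M k m Hh); auto.
          - assert (M < 2 ^ M) by apply lt_pow2. lia.
          - assert (M < 2 ^ M) by apply lt_pow2. lia. }
        lia.
      + intros x [<-|Hx]; auto.
      + intros x [<-|Hx].
        * exists m, f; auto.
        * destruct (HL4 x Hx) as [k [g [Hk [Hg Eg]]]]. exists k, g; repeat split; auto; lia. }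
  destruct (Main M (le_n _)) as [L [HL1 [HL2 [HL3 _]]]].
  assert (Hle := NoDup_incl_length HL2 HL3). unfold M in HL1. lia.
Qed.

Open Scope nat_scope.

Lemma orient_ok o : orientation V adj o ->
  let H := fun f => automorphism V adj f /\ preserves_orientation V adj o f in
  (forall f, H f -> Aut f) /\ NoSwap H /\ Hclosed H.
Proof.
  intros [O1 O2] H. split; [|split].
  - intros f [Hf _]; exact Hf.
  - intros h u v [Hh Ph] A E1 E2. specialize (Ph u v A). rewrite E1, E2 in Ph.
    specialize (O2 u v A). tauto.
  - intros f g [Hf Pf] [Hg Pg].
    destruct (auto_inv f Hf) as [f' [Hf' [F1 F2]]].
    exists (fun x => g (f' x)). split; [split|].
    + apply auto_comp; auto.
    + intros u v A. assert (A' := auto_adj f' u v Hf' A).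
      assert (X := Pf _ _ A'); assert (Y := Pg _ _ A'); rewrite !F2 in X; tauto.
    + intro x. rewrite F1. auto.
Qed.

Lemma color_ok (C : Type) (c : V -> C) : proper_coloring V adj C c ->
  let H := fun f => automorphism V adj f /\ forall v, c (f v) = c v in
  (forall f, H f -> Aut f) /\ NoSwap H /\ Hclosed H.
Proof.
  intros P H. split; [|split].
  - intros f [Hf _]; exact Hf.
  - intros h u v [Hh Ph] A E1 E2. apply (P u v A). rewrite <- (Ph u), E1. auto.
  - intros f g [Hf Pf] [Hg Pg].
    destruct (auto_inv f Hf) as [f' [Hf' [F1 F2]]].
    exists (fun x => g (f' x)). split; [split|].
    + apply auto_comp; auto.
    + intro v. rewrite Pg. rewrite <- (Pf (f' v)), F2. auto.
    + intro x. rewrite F1. auto.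
Qed.

Definition mask (K : nat) (n : Z) : nat := K * 2 ^ (Z.to_nat (- n)) / 2 ^ (Z.to_nat n).

Lemma mask0 K : mask K 0 = K.
Proof. unfold mask. change (Z.to_nat (- 0)) with 0. change (Z.to_nat 0) with 0. rewrite Nat.pow_0_r, Nat.mul_1_r, Nat.div_1_r. auto. Qed.

Lemma mask_succ K n : mask K (n + 1) = mask K n / 2.
Proof.
  unfold mask. destruct (Z_lt_le_dec n 0) as [Hn|Hn].
  - replace (Z.to_nat (n+1)) with 0 by lia. replace (Z.to_nat n) with 0 by lia.
    replace (Z.to_nat (- n)) with (S (Z.to_nat (- (n+1)))) by lia.
    rewrite Nat.pow_0_r, !Nat.div_1_r, Nat.pow_succ_r'.
    replace (K * (2 * 2 ^ Z.to_nat (- (n + 1)))) with (K * 2 ^ Z.to_nat (- (n + 1)) * 2) by ring.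
    rewrite Nat.div_mul; lia.
  - replace (Z.to_nat (- (n+1))) with 0 by lia. replace (Z.to_nat (- n)) with 0 by lia.
    replace (Z.to_nat (n+1)) with (S (Z.to_nat n)) by lia.
    rewrite Nat.Div0.div_div, Nat.pow_succ_r'. f_equal. lia.
Qed.

Lemma lxor_div2 a b : Nat.lxor a b / 2 = Nat.lxor (a / 2) (b / 2).
Proof.
  assert (E := Nat.shiftr_lxor a b 1). rewrite !Nat.shiftr_div_pow2 in E. exact E.
Qed.

Definition Phi (d : Z) (K : nat) (x : Z * nat) : Z * nat :=
  ((fst x + d)%Z, Nat.lxor (snd x) (mask K (fst x))).
Definition Phi' (d : Z) (K : nat) (x : Z * nat) : Z * nat :=
  ((fst x - d)%Z, Nat.lxor (snd x) (mask K (fst x - d))).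

Lemma Phi_par d K x : Phi d K (par x) = par (Phi d K x).
Proof.
  destruct x as [n k]. unfold Phi, par. cbn [fst snd]. apply (f_equal2 pair). lia.
  rewrite mask_succ, lxor_div2. auto.
Qed.

Lemma Phi_K1 d K x : Phi' d K (Phi d K x) = x.
Proof.
  destruct x as [n k]. unfold Phi, Phi'. cbn [fst snd].
  replace (n + d - d)%Z with n by lia.
  rewrite Nat.lxor_assoc, Nat.lxor_nilpotent, Nat.lxor_0_r. auto.
Qed.
Lemma Phi_K2 d K x : Phi d K (Phi' d K x) = x.
Proof.
  destruct x as [n k]. unfold Phi, Phi'. cbn [fst snd].
  replace (n - d + d)%Z with n by lia.
  rewrite Nat.lxor_assoc, Nat.lxor_nilpotent, Nat.lxor_0_r. auto.
Qed.

Definition liftV (g : Z * nat -> Z * nat) (v : V) : V :=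
  match v with T x => T (g x) | D x => D (g x) end.

Lemma lift_auto g g' : (forall x, g' (g x) = x) -> (forall y, g (g' y) = y) ->
  (forall x, g (par x) = par (g x)) -> Aut (liftV g).
Proof.
  intros G1 G2 Gp.
  assert (Gp' : forall y, g' (par y) = par (g' y)).
  { intro y. rewrite <- (G2 y) at 1. rewrite <- Gp, G1. auto. }
  assert (Gi : forall a b, g a = g b -> a = b).
  { intros a b E. rewrite <- (G1 a), <- (G1 b), E. auto. }
  assert (Gi' : forall a b, g' a = g' b -> a = b).
  { intros a b E. rewrite <- (G2 a), <- (G2 b), E. auto. }
  split.
  - exists (liftV g'). split; intros [x|x]; simpl; rewrite ?G1, ?G2; auto.
  - intros u v. rewrite !adj_char.
    destruct u as [z|z], v as [w|w]; simpl; rewrite ?Gp; try tauto.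
    + split.
      * intros [H|[H|[H1 H2]]].
        -- left. subst w. apply Gp.
        -- right; left. subst z. apply Gp.
        -- right; right. split. rewrite <- !Gp, H1; auto. intro E; apply H2, Gi; auto.
      * intros [H|[H|[H1 H2]]].
        -- left. apply Gi. rewrite H, Gp. auto.
        -- right; left. apply Gi. rewrite H, Gp; auto.
        -- right; right. split. apply Gi. rewrite !Gp; auto. intro E; subst; auto.
    + split; intro H. subst w. symmetry; apply Gp. apply Gi. rewrite Gp. auto.
    + split; intro H. subst z. symmetry; apply Gp. apply Gi. rewrite Gp. auto.
Qed.

Lemma qt : quasi_transitive V adj.
Proof.
  exists [T (0%Z, 0); D (0%Z, 0)]. intros v.
  assert (A : forall d K, Aut (liftV (Phi d K))).
  { intros d K. apply (lift_auto _ (Phi' d K)). apply Phi_K1. apply Phi_K2. apply Phi_par. }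
  assert (E : forall d K, Phi d K (0%Z, 0) = (d, K)).
  { intros d K. unfold Phi. cbn [fst snd]. rewrite mask0. apply (f_equal2 pair); [lia| apply Nat.lxor_0_l]. }
  destruct v as [[d K]|[d K]].
  - exists (T (0%Z, 0)), (liftV (Phi d K)). split; [left; auto|split; [apply A|]].
    cbn [liftV]. rewrite E. auto.
  - exists (D (0%Z, 0)), (liftV (Phi d K)). split; [right; left; auto|split; [apply A|]].
    cbn [liftV]. rewrite E. auto.
Qed.

Lemma simple : simple_graph V adj.
Proof. split. apply adj_sym. apply adj_irrefl. Qed.

Lemma lf : locally_finite V adj.
Proof.
  intros [x|y].
  - exists [T (par x); T (c0 (par x)); T (c1 (par x)); D (par x); T (c0 x); T (c1 x)].
    intros w A. apply adj_char in A. destruct w as [z|z]; simpl in A.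
    + destruct A as [A|[A|[A1 A2]]].
      * subst; simpl; auto.
      * destruct (par_inv z x (eq_sym A)) as [->| ->]; simpl; tauto.
      * destruct (par_inv z (par x) (eq_sym A1)) as [->| ->]; simpl; tauto.
    + subst; simpl; tauto.
  - exists [T (c0 y); T (c1 y)]. intros w A. apply D_nbrs in A. destruct A as [->| ->]; simpl; auto.
Qed.

Open Scope nat_scope.

Fixpoint bl {A : Type} (x : A) (l : list A) : A :=
  match l with
  | [] => x
  | y :: l' => match l' with [] => x | _ => bl y l' end
  end.

Lemma last_cons {A : Type} (a : A) l d : last (a :: l) d = last l a.
Proof. revert a d; induction l as [|b l IH]; intros a d; [reflexivity|].
  change (last (b :: l) d = last (b :: l) a). rewrite !IH. auto. Qed.

Lemma last_in {A : Type} (l : list A) d : l <> [] -> In (last l d) l.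
Proof. revert d; induction l as [|a l IH]; intros d H; [congruence|]. rewrite last_cons.
  destruct l as [|b l]. simpl; auto. right. apply IH. congruence. Qed.

Lemma bl_in {A : Type} (x : A) l : 2 <= length l -> In (bl x l) l.
Proof. revert x; induction l as [|a l IH]; intros x H; simpl in H; [lia|].
  destruct l as [|b l]; simpl in H; [lia|].
  change (In (bl a (b :: l)) (a :: b :: l)).
  destruct l as [|c l].
  - simpl; auto.
  - right. apply IH. simpl; lia.
Qed.

Definition eTg {A : Type} (P : A -> A) (u w : A) : Prop := w = P u \/ u = P w.

Lemma down_all {A : Type} (P : A -> A) (lv : A -> Z) (HP : forall u, (lv u < lv (P u))%Z) :
  forall l y x, NoDup (x :: y :: l) -> x = P y -> chain (eTg P) y l ->
  P (last l y) = bl x (y :: l) /\ (lv (last l y) <= lv y)%Z.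
Proof.
  induction l as [|z l IH]; intros y x ND Hx Ch.
  - simpl. split; auto. lia.
  - destruct Ch as [Eyz Ch]. destruct Eyz as [Ez|Ey].
    + exfalso. inversion ND; subst. apply H1. simpl; auto.
    + assert (ND' : NoDup (y :: z :: l)) by (inversion ND; auto).
      destruct (IH z y ND' Ey Ch) as [I1 I2].
      rewrite last_cons. split.
      * rewrite I1. reflexivity.
      * specialize (HP z). rewrite <- Ey in HP. lia.
Qed.

Lemma G_lemma {A : Type} (P : A -> A) (lv : A -> Z) (HP : forall u, (lv u < lv (P u))%Z) :
  forall l x, NoDup (x :: l) -> chain (eTg P) x l -> l <> [] ->
  (lv x < lv (last l x))%Z \/ P (last l x) = bl x l.
Proof.
  induction l as [|y l IH]; intros x ND Ch Hne; [congruence|].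
  destruct Ch as [Exy Ch]. rewrite last_cons.
  destruct Exy as [Ey|Ex].
  - destruct l as [|z l].
    + left. simpl. subst y. apply HP.
    + assert (ND' : NoDup (y :: z :: l)) by (inversion ND; auto).
      destruct (IH y ND' Ch ltac:(congruence)) as [I|I].
      * left. specialize (HP x). rewrite <- Ey in HP. lia.
      * right. rewrite I. reflexivity.
  - right. destruct (down_all P lv HP l y x ND Ex Ch) as [I _]. exact I.
Qed.

Lemma acyclic {A : Type} (P : A -> A) (lv : A -> Z) (HP : forall u, (lv u < lv (P u))%Z) :
  forall (x : A) (l : list A),
      2 <= length l -> NoDup (x :: l) -> chain (eTg P) x l -> ~ eTg P (last l x) x.
Proof.
  intros x l Hl ND Ch [Ex|Ez].
  - assert (Hne : l <> []) by (destruct l; simpl in Hl; [lia|congruence]).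
    destruct (G_lemma P lv HP l x ND Ch Hne) as [I|I].
    + specialize (HP (last l x)). rewrite <- Ex in HP. lia.
    + rewrite <- Ex in I. apply NoDup_cons_iff in ND as [Nin _]. apply Nin. rewrite I. apply bl_in; auto.
  - destruct l as [|y l]; simpl in Hl; [lia|].
    destruct Ch as [Exy Ch]. rewrite last_cons in Ez.
    assert (Hne : l <> []) by (destruct l; simpl in Hl; [lia|congruence]).
    destruct Exy as [Ey|Ex].
    + apply NoDup_cons_iff in ND as [_ ND2]. apply NoDup_cons_iff in ND2 as [Nin _].
      apply Nin. assert (Hy : y = last l y) by congruence. rewrite Hy at 1. apply last_in; auto.
    + destruct (down_all P lv HP l y x ND Ex Ch) as [_ I].
      assert (H1 := HP x). assert (H2 := HP y). rewrite <- Ez in H1. rewrite <- Ex in H2. lia.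
Qed.

Lemma chain_app {A : Type} (e : A -> A -> Prop) a l1 l2 :
  chain e a l1 -> chain e (last l1 a) l2 -> chain e a (l1 ++ l2).
Proof. revert a; induction l1 as [|b l1 IH]; intros a H1 H2; simpl in *; auto.
  destruct H1 as [H H1]. split; auto. apply IH; auto. rewrite <- last_cons with (d := a). auto. Qed.

Lemma last_app' {A : Type} (l1 l2 : list A) a : last (l1 ++ l2) a = last l2 (last l1 a).
Proof. revert a; induction l1 as [|b l1 IH]; intros a; [reflexivity|].
  change ((b :: l1) ++ l2) with (b :: (l1 ++ l2)). rewrite !last_cons. apply IH. Qed.

Definition Conn {A : Type} (e : A -> A -> Prop) (a b : A) : Prop :=
  exists l, chain e a l /\ last l a = b.

Lemma Conn_trans {A : Type} (e : A -> A -> Prop) a b c : Conn e a b -> Conn e b c -> Conn e a c.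
Proof. intros [l1 [C1 L1]] [l2 [C2 L2]]. exists (l1 ++ l2). split.
  apply chain_app; auto. rewrite L1; auto. rewrite last_app', L1; auto. Qed.

Lemma Conn_step {A : Type} (e : A -> A -> Prop) a b : e a b -> Conn e a b.
Proof. intro H. exists [b]. simpl; auto. Qed.

Lemma Conn_refl {A : Type} (e : A -> A -> Prop) a : Conn e a a.
Proof. exists []. simpl; auto. Qed.

Lemma Conn_sym {A : Type} (e : A -> A -> Prop) (Hs : forall a b, e a b -> e b a) a b :
  Conn e a b -> Conn e b a.
Proof. intros [l [C L]]. subst b. revert a C; induction l as [|y l IH]; intros a C.
  - apply Conn_refl.
  - destruct C as [E C]. rewrite last_cons. apply (Conn_trans _ _ y). auto. apply Conn_step; auto. Qed.

Definition Pv (v : V) : V := match v with T x => T (par x) | D x => T x end.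
Definition lvv (v : V) : Z := match v with T x => (2 * fst x)%Z | D x => (2 * fst x - 1)%Z end.
Lemma HPv u : (lvv u < lvv (Pv u))%Z.
Proof. destruct u as [[n k]|[n k]]; unfold lvv, Pv, par; cbn [fst snd]; lia. Qed.

Definition eT := eTg Pv.
Definition bag (v : V) : list V :=
  match v with T x => [T x; T (c0 x); T (c1 x)] | D x => [D x; T (c0 x); T (c1 x)] end.

Lemma eT_sym a b : eT a b -> eT b a.
Proof. unfold eT, eTg; tauto. Qed.

Lemma reach_par d x : Conn eT (T x) (T (parN d x)).
Proof. revert x; induction d; intros x; simpl. apply Conn_refl.
  apply (Conn_trans _ _ (T (par x))). apply Conn_step. left; auto. auto. Qed.

Lemma reach v (m : Z) : (match v with T x => fst x + Z.of_nat (snd x) | D x => fst x + Z.of_nat (snd x) end <= m)%Z ->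
  Conn eT v (T (m, 0)).
Proof.
  assert (RT : forall n k, (n + Z.of_nat k <= m)%Z -> Conn eT (T (n, k)) (T (m, 0))).
  { intros n k Hm. apply (Conn_trans _ _ (T ((n + Z.of_nat k)%Z, 0))).
    - assert (X := reach_par k (n, k)). rewrite parN_val, Nat.div_small in X; auto. apply lt_pow2.
    - assert (X := reach_par (Z.to_nat (m - (n + Z.of_nat k))) ((n + Z.of_nat k)%Z, 0)).
      rewrite parN_val, Nat.Div0.div_0_l in X.
      replace (n + Z.of_nat k + Z.of_nat (Z.to_nat (m - (n + Z.of_nat k))))%Z with m in X by lia. auto. }
  destruct v as [[n k]|[n k]]; simpl; intro Hm. auto.
  apply (Conn_trans _ _ (T (n, k))). apply Conn_step. left; auto. auto.
Qed.

Lemma star {A : Type} (e : A -> A -> Prop) (S : A -> Prop) c : S c ->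
  (forall a, S a -> a = c \/ (e a c /\ e c a)) -> connected_in e S.
Proof.
  intros Sc H a b Sa Sb.
  destruct (H a Sa) as [Ea|[Ea1 Ea2]]; destruct (H b Sb) as [Eb|[Eb1 Eb2]]; subst.
  - exists []. simpl; auto.
  - exists [b]. simpl; auto.
  - exists [c]. simpl; auto.
  - exists [c; b]. simpl; auto.
Qed.

Lemma tw : treewidth_le adj 2.
Proof.
  exists V, eT, bag. split.
  - split; [|split; [|split]].
    + split; [|split; [|split]].
      * constructor. exact (T (0%Z, 0)).
      * split. apply eT_sym. intros v [E|E]; assert (X := HPv v); rewrite <- E in X; lia.
      * intros a b _ _. set (m := Z.max (match a with T x => fst x + Z.of_nat (snd x) | D x => fst x + Z.of_nat (snd x) end)
                                       (match b with T x => fst x + Z.of_nat (snd x) | D x => fst x + Z.of_nat (snd x) end)).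
        assert (C := Conn_trans _ _ _ _ (reach a m (Z.le_max_l _ _)) (Conn_sym _ eT_sym _ _ (reach b m (Z.le_max_r _ _)))).
        destruct C as [l [C L]]. exists l. split; [auto|split; auto]. apply Forall_forall; auto.
      * apply (acyclic Pv lvv HPv).
    + intros [x|x]; [exists (T x)|exists (D x)]; simpl; auto.
    + intros u v [x [E|E]]; destruct E; first [exists (T x); simpl; tauto | exists (D x); simpl; tauto].
    + intros [c|y].
      * apply (star _ _ (T (par c))).
        -- simpl. destruct (par_inv c (par c) eq_refl) as [<-| <-]; auto.
        -- intros [x|x] Hin; simpl in Hin.
           ++ destruct Hin as [E|[E|[E|[]]]].
              ** right. assert (c = x) by congruence. subst c. split; unfold eT, eTg; cbn [Pv]; auto.
              ** left. assert (c = c0 x) by congruence. subst c. rewrite par_c0. auto.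
              ** left. assert (c = c1 x) by congruence. subst c. rewrite par_c1. auto.
           ++ destruct Hin as [E|[E|[E|[]]]]; [discriminate| |].
              ** assert (c = c0 x) by congruence. subst c. rewrite par_c0.
                 right; split; unfold eT, eTg; cbn [Pv]; auto.
              ** assert (c = c1 x) by congruence. subst c. rewrite par_c1.
                 right; split; unfold eT, eTg; cbn [Pv]; auto.
      * apply (star _ _ (D y)). simpl; auto.
        intros [x|x] Hin; simpl in Hin.
        -- destruct Hin as [E|[E|[E|[]]]]; discriminate.
        -- destruct Hin as [E|[E|[E|[]]]]; try discriminate. left; congruence.
  - intros [x|x]; simpl; lia.
Qed.

Open Scope R_scope.
Lemma zn_eq_dec' (x y : Z * nat) : {x = y} + {x <> y}.
Proof. decide equality; [apply Nat.eq_dec | apply Z.eq_dec]. Qed.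

Definition p2 (n : Z) : R := powerRZ 2 n.
Lemma p2_pos n : 0 < p2 n.
Proof. apply powerRZ_lt. lra. Qed.
Lemma p2_pred n : p2 n = 2 * p2 (n - 1).
Proof. unfold p2. replace n with ((n - 1) + 1)%Z at 1 by lia.
  rewrite powerRZ_add by lra. simpl. ring. Qed.

Definition pos (v : V) : R * R :=
  match v with
  | T x => (INR (snd x) * p2 (fst x), IZR (fst x))
  | D x => (INR (snd x) * p2 (fst x) + p2 (fst x) / 4, IZR (fst x) - 3/4)
  end.

Definition Ax (x : Z * nat) := INR (snd x) * p2 (fst x).
Definition Hx (x : Z * nat) := p2 (fst x) / 2.
Definition Nx (x : Z * nat) := IZR (fst x).

Lemma Hx_pos x : 0 < Hx x.
Proof. unfold Hx. assert (H := p2_pos (fst x)). lra. Qed.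

Lemma pos_T x : pos (T x) = (Ax x, Nx x).
Proof. reflexivity. Qed.
Lemma pos_c0 x : pos (T (c0 x)) = (Ax x, Nx x - 1).
Proof. destruct x as [n k]. unfold pos, c0, Ax, Nx; cbn [fst snd].
  rewrite minus_IZR, mult_INR, (p2_pred n). simpl (INR 2). f_equal; ring. Qed.
Lemma pos_c1 x : pos (T (c1 x)) = (Ax x + Hx x, Nx x - 1).
Proof. destruct x as [n k]. unfold pos, c1, Ax, Hx, Nx; cbn [fst snd].
  rewrite minus_IZR, plus_INR, mult_INR, (p2_pred n). simpl (INR 2). simpl (INR 1). f_equal; field. Qed.
Lemma pos_D x : pos (D x) = (Ax x + Hx x / 2, Nx x - 3/4).
Proof. destruct x as [n k]. unfold pos, Ax, Hx, Nx; cbn [fst snd]. f_equal. field. Qed.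

Definition arc (u v : V) (t : R) : R * R :=
  (fst (pos u) + t * (fst (pos v) - fst (pos u)), snd (pos u) + t * (snd (pos v) - snd (pos u))).

Lemma arc_sym u v t : arc v u t = arc u v (1 - t).
Proof. unfold arc. f_equal; ring. Qed.

Lemma arc_ok' u v : pos u <> pos v -> arc_ok (arc u v) (pos u) (pos v).
Proof.
  intro Hne. unfold arc_ok, arc. destruct (pos u) as [x1 y1], (pos v) as [x2 y2]; cbn [fst snd].
  split; [intro t; reg|split; [intro t; reg|split; [f_equal; ring|split; [f_equal; ring|]]]].
  intros s t _ _ E. apply pair_equal_spec in E as [E1 E2].
  destruct (Req_dec x1 x2) as [Ex|Ex].
  - destruct (Req_dec y1 y2) as [Ey|Ey]. subst; tauto.
    apply (Rmult_eq_reg_r (y2 - y1)). lra. lra.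
  - apply (Rmult_eq_reg_r (x2 - x1)). lra. lra.
Qed.

Lemma Z_between (a b : Z) : IZR a < IZR b < IZR a + 1 -> False.
Proof. intros [H1 H2]. apply lt_IZR in H1. rewrite <- plus_IZR in H2. apply lt_IZR in H2. lia. Qed.

Lemma Z_eq_lvl (a b : Z) : IZR a - 1 < IZR b < IZR a + 1 -> b = a.
Proof. intros [H1 H2]. rewrite <- minus_IZR in H1. rewrite <- plus_IZR in H2.
  apply lt_IZR in H1. apply lt_IZR in H2. lia. Qed.

Lemma nat_between (a b : nat) q r : 0 < q -> 0 < r < 1 -> INR b * q = INR a * q + r * q -> False.
Proof.
  intros Hq Hr E. assert (E' : INR b = INR a + r).
  { apply (Rmult_eq_reg_r q). lra. lra. }
  assert (H1 : INR a < INR b) by lra. assert (H2 : INR b < INR (S a)) by (rewrite S_INR; lra).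
  apply INR_lt in H1. apply INR_lt in H2. lia.
Qed.

Lemma pos_inj u v : pos u = pos v -> u = v.
Proof.
  destruct u as [[n k]|[n k]], v as [[m j]|[m j]]; unfold pos; cbn [fst snd];
  intro E; apply pair_equal_spec in E as [E1 E2].
  - apply eq_IZR in E2. subst m. assert (P := p2_pos n).
    assert (INR k = INR j) by (apply (Rmult_eq_reg_r (p2 n)); lra).
    apply INR_eq in H. subst; auto.
  - exfalso. apply (Z_between (m - 1) n). rewrite minus_IZR. lra.
  - exfalso. apply (Z_between (n - 1) m). rewrite minus_IZR. lra.
  - assert (m = n) by (apply Z_eq_lvl; lra). subst m. assert (P := p2_pos n).
    assert (INR k = INR j) by (apply (Rmult_eq_reg_r (p2 n)); lra).
    apply INR_eq in H. subst; auto.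
Qed.

Lemma interior_avoid x a b s w : E x a b -> 0 < s < 1 -> arc a b s <> pos w.
Proof.
  intros HE Hs Eq.
  destruct HE; unfold arc in Eq;
  rewrite ?pos_c0, ?pos_c1, ?pos_D, ?pos_T in Eq; destruct x as [n k];
  assert (Hq := p2_pos n);
  unfold Ax, Hx, Nx in Eq; cbn [fst snd] in Eq;
  destruct w as [[m j]|[m j]]; unfold pos in Eq; cbn [fst snd] in Eq;
  apply pair_equal_spec in Eq as [Ex Ey].
  all: idtac.
  - apply (Z_between (n - 1) m). rewrite minus_IZR. lra.
  - assert (m = n) by (apply Z_eq_lvl; lra). subst m.
    apply (nat_between j k (p2 n) (1/4)); lra.
  - apply (Z_between (n - 1) m). rewrite minus_IZR. lra.
  - assert (m = n) by (apply Z_eq_lvl; lra). subst m.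
    assert (s = 3/4) by lra. subst s.
    apply (nat_between k j (p2 n) (1/8)); lra.
  - assert (m = (n - 1)%Z) by (apply eq_IZR; rewrite minus_IZR; lra). subst m.
    rewrite (p2_pred n) in Ex. assert (Hq' := p2_pos (n - 1)).
    apply (nat_between (2 * k) j (p2 (n - 1)) s); auto. rewrite mult_INR. simpl (INR 2). lra.
  - apply (Z_between (m - n) 0). rewrite minus_IZR. lra.
  - apply (Z_between (n - 1) m). rewrite minus_IZR. lra.
  - apply (Z_between (m - n) 0). rewrite minus_IZR. lra.
  - apply (Z_between (n - 1) m). rewrite minus_IZR. lra.
  - apply (Z_between (m - n) 0). rewrite minus_IZR. lra.
Qed.

Definition InTri (x : Z * nat) (p : R * R) : Prop :=
  Nx x - 1 <= snd p <= Nx x /\ Ax x <= fst p <= Ax x + Hx x * (Nx x - snd p).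

Lemma E_tri x a b s : E x a b -> 0 <= s <= 1 -> InTri x (arc a b s).
Proof.
  intros HE Hs. assert (Hh := Hx_pos x). unfold InTri.
  destruct HE; unfold arc; rewrite ?pos_c0, ?pos_c1, ?pos_D, ?pos_T; cbn [fst snd];
  split; split; nra.
Qed.

Lemma tri_inter x x' p : x <> x' -> InTri x p -> InTri x' p -> p = pos (T x) \/ p = pos (T x').
Proof.
  destruct x as [n k], x' as [m j], p as [px py]. unfold InTri, Ax, Hx, Nx; cbn [fst snd].
  intros Hne [[Y1 Y2] [X1 X2]] [[Y3 Y4] [X3 X4]].
  assert (Hn := p2_pos n). assert (Hm := p2_pos m).
  assert (L1 : (n - 1 <= m)%Z) by (apply le_IZR; rewrite minus_IZR; lra).
  assert (L2 : (m - 1 <= n)%Z) by (apply le_IZR; rewrite minus_IZR; lra).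
  assert (C : m = (n + 1)%Z \/ m = n \/ m = (n - 1)%Z) by lia.
  destruct C as [C|[C|C]]; subst m; rewrite ?minus_IZR, ?plus_IZR in *.
  - left. assert (py = IZR n) by lra. subst py.
    unfold pos; cbn [fst snd]. f_equal. nra.
  - exfalso. assert (k <> j) by (intro; subst; auto).
    assert (L : (k < j \/ j < k)%nat) by lia. destruct L as [L|L].
    + apply le_INR in L. rewrite S_INR in L. nra.
    + apply le_INR in L. rewrite S_INR in L. nra.
  - right. assert (py = IZR n - 1) by lra. subst py.
    unfold pos; cbn [fst snd]. rewrite minus_IZR. f_equal. nra.
Qed.

Lemma cross_core x x' a b a' b' s t : E x a b -> E x' a' b' -> ~ (a = a' /\ b = b') ->
  0 < s < 1 -> 0 < t < 1 -> arc a b s <> arc a' b' t.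
Proof.
  intros H1 H2 Hne Hs Ht Eq.
  destruct (zn_eq_dec' x x') as [<-|Nx'].
  - assert (Hh := Hx_pos x).
    destruct H1; destruct H2; try (apply Hne; split; reflexivity);
    unfold arc in Eq; rewrite ?pos_c0, ?pos_c1, ?pos_D, ?pos_T in Eq; cbn [fst snd] in Eq;
    apply pair_equal_spec in Eq as [E1 E2]; nra.
  - assert (T1 := E_tri x a b s H1 ltac:(lra)). assert (T2 := E_tri x' a' b' t H2 ltac:(lra)).
    rewrite Eq in T1. destruct (tri_inter x x' _ Nx' T1 T2) as [P|P].
    + apply (interior_avoid x' a' b' t (T x) H2 Ht P).
    + apply (interior_avoid x' a' b' t (T x') H2 Ht P).
Qed.

Lemma norm_edge u v s : adj u v -> 0 < s < 1 ->
  exists x a b s', E x a b /\ 0 < s' < 1 /\ arc u v s = arc a b s' /\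
    ((u = a /\ v = b) \/ (u = b /\ v = a)).
Proof.
  intros [x [H|H]] Hs.
  - exists x, u, v, s. split; [auto|split; [auto|split; [reflexivity|left; auto]]].
  - exists x, v, u, (1 - s). split; [auto|split; [lra|split; [apply arc_sym|right; auto]]].
Qed.

Lemma planar_ok : planar V adj.
Proof.
  exists pos, arc. split; [|split; [|split; [|split]]].
  - apply pos_inj.
  - intros u v A. apply arc_ok'. intro E. apply pos_inj in E. subst v. exact (adj_irrefl u A).
  - intros u v t _. apply arc_sym.
  - intros u v w t A Ht. destruct (norm_edge u v t A Ht) as [x [a [b [s' [HE [Hs' [Eq _]]]]]]].
    rewrite Eq. apply (interior_avoid x a b s' w HE Hs').
  - intros u v u' v' s t A A' Hne Hs Ht.
    destruct (norm_edge u v s A Hs) as [x [a [b [s' [HE [Hs' [Eq O]]]]]]].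
    destruct (norm_edge u' v' t A' Ht) as [x' [a' [b' [t' [HE' [Ht' [Eq' O']]]]]]].
    rewrite Eq, Eq'. apply (cross_core x x' a b a' b' s' t' HE HE'); auto.
    intros [<- <-]. apply Hne.
    destruct O as [[-> ->]|[-> ->]]; destruct O' as [[-> ->]|[-> ->]]; tauto.
Qed.

Open Scope R_scope.

Theorem mainTheorem17 :
  exists (V : Type) (adj : V -> V -> Prop),
    simple_graph V adj /\ locally_finite V adj /\ quasi_transitive V adj /\
    planar V adj /\ treewidth_le adj 2 /\
    (forall o : V -> V -> Prop,
        orientation V adj o -> ~ periodic_orientation V adj o) /\
    (forall (C : Type) (c : V -> C),
        proper_coloring V adj C c -> ~ periodic_coloring V adj C c).
Proof.
  exists V, adj. split; [exact simple|split; [exact lf|split; [exact qt|split; [exact planar_ok|split; [exact tw|split]]]]].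
  - intros o Ho. destruct (orient_ok o Ho) as [A [B C]]. exact (no_periodic _ A B C).
  - intros C c Hc. destruct (color_ok C c Hc) as [A [B D']]. exact (no_periodic _ A B D').
Qed.
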